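(* Let $G$ be an ordered abelian group, $\beta_0,\beta_1,c\in G$, $\lambda$ a limit ordinal, and $(\gamma_{0,j})_{j<\lambda}$ a well-ordered, monotone increasing family of elements $\ge0$ of $G$ without last element; set $\gamma_{1,j}=\gamma_{0,j}+c$ for $j<\lambda$. Then there exist a subset $A\subset[1,\lambda)$ and a map $\sigma:A\to[1,\lambda)$ such that $\beta_0+\gamma_{0,j_0}\neq\beta_1+\gamma_{1,j_1}$ for all $j_0,j_1<\lambda$ satisfying $j_1\neq\sigma(j_0)$ whenever $j_0\in A$. *)

(* Defs.v *)
From mathcomp Require Import all_boot all_algebra.
Set Implicit Arguments. Unset Strict Implicit. Unset Printing Implicit Defensive.
Import GRing.Theory.
Local Open Scope ring_scope.

Definition ordered_abelian_group (G : zmodType) (le : G -> G -> Prop) : Prop :=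
  [/\ (forall x, le x x),
      (forall x y, le x y -> le y x -> x = y),
      (forall x y z, le x y -> le y z -> le x z),
      (forall x y, le x y \/ le y x)
    & (forall x y z, le x y -> le (x + z) (y + z))].

Definition strict_of (T : Type) (le : T -> T -> Prop) (x y : T) : Prop :=
  le x y /\ x <> y.

(* A limit ordinal lambda, presented as the well-ordered set [0, lambda) of
   its elements: a strict total order that is well-founded, nonempty and has
   no last element. *)
Definition limit_ordinal_type (J : Type) (ltJ : J -> J -> Prop) : Prop :=
  (forall i, ~ ltJ i i) /\
  (forall i j k, ltJ i j -> ltJ j k -> ltJ i k) /\
  (forall i j, [\/ ltJ i j, i = j | ltJ j i]) /\
  well_founded ltJ /\
  (exists j : J, True) /\
  (forall i, exists j, ltJ i j).

(* j lies in [1, lambda), i.e. j is not the least ordinal 0. *)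
Definition nonzero_ord (J : Type) (ltJ : J -> J -> Prop) (j : J) : Prop :=
  exists i, ltJ i j.

(* Main.v *)
Require Import Defs.
From Stdlib Require Import ClassicalEpsilon.
From mathcomp Require Import all_boot all_algebra.
Import GRing.Theory.
Local Open Scope ring_scope.

Theorem lemma1p2
  (G : zmodType) (le : G -> G -> Prop) (HG : ordered_abelian_group le)
  (beta0 beta1 c : G)
  (J : Type) (ltJ : J -> J -> Prop) (Hlam : limit_ordinal_type ltJ)
  (gamma0 gamma1 : J -> G)
  (Hpos : forall j, le 0 (gamma0 j))
  (Hincr : forall i j, ltJ i j -> strict_of le (gamma0 i) (gamma0 j))
  (Hgamma1 : forall j, gamma1 j = gamma0 j + c) :
  exists (A : J -> Prop) (sigma : J -> J),
    (forall j, A j -> nonzero_ord ltJ j /\ nonzero_ord ltJ (sigma j)) /\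
    (forall j0 j1, nonzero_ord ltJ j0 -> nonzero_ord ltJ j1 ->
       (A j0 -> j1 <> sigma j0) ->
       beta0 + gamma0 j0 <> beta1 + gamma1 j1).
Proof.
have [_ [_ [Htri [_ [[j00 _] _]]]]] := Hlam.
have inj : forall i j, gamma0 i = gamma0 j -> i = j.
  move=> i j E; case: (Htri i j) => // H.
  - by have [_ /(_ E)] := Hincr _ _ H.
  - by have [_ /(_ (esym E))] := Hincr _ _ H.
pose P := fun j0 j1 => nonzero_ord ltJ j1 /\ beta0 + gamma0 j0 = beta1 + gamma1 j1.
exists (fun j0 => nonzero_ord ltJ j0 /\ exists j1, P j0 j1).
exists (fun j0 => epsilon (inhabits j00) (P j0)).
split.
- move=> j [Hj Hex]; split=> //; exact: (epsilon_spec _ _ Hex).1.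
- move=> j0 j1 H0 H1 Hne E; apply: Hne; first by split=> //; exists j1.
  apply: inj.
  have [_ E'] := epsilon_spec (inhabits j00) (P j0) (ex_intro _ j1 (conj H1 E)).
  rewrite !Hgamma1 in E E'; rewrite E in E'.
  by move/addrI/addIr: E'.
Qed.
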